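(* There exist constants $c>0$ and $r_*>0$, depending only on $m$ and $\{p_1,\dots,p_m\}$, such that for all $0<r<r_*$ and all real $y$ with $r^{2/3}<|y|\le\tfrac12$, the number of $h\in\mathcal S(r)$ with $\|hy\|\ge \frac{1}{3p_1}$ is at least $c(\log 1/r)^{m-1}$.
   Context: Fix an integer $m\ge 2$ and integers $1<p_1<\dots<p_m$ with $\gcd(p_i,p_j)=1$ for $i\neq j$; let $\mathcal S=\{p_1^{\alpha_1}\cdots p_m^{\alpha_m}:\alpha_i\in\mathbb Z_{\ge0}\}$ and $\mathcal S(r)=\{h\in\mathcal S: hr\le1\}$ for $r>0$. $\|x\|$ denotes the distance from the real number $x$ to the nearest integer. *)

(* Defs.v *)
From Stdlib Require Import Reals Lra Lia Arith List ZArith.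
Open Scope R_scope.

Fixpoint prod_pow (p alpha : nat -> nat) (k : nat) : nat :=
  match k with
  | O => 1%nat
  | S k' => (prod_pow p alpha k' * Nat.pow (p k) (alpha k))%nat
  end.

Definition inS (m : nat) (p : nat -> nat) (h : nat) : Prop :=
  exists alpha : nat -> nat, h = prod_pow p alpha m.

Definition inSr (m : nat) (p : nat -> nat) (r : R) (h : nat) : Prop :=
  inS m p h /\ INR h * r <= 1.

Definition dist_nint (x : R) : R :=
  Rmin (Rabs (x - IZR (Int_part x))) (Rabs (x - IZR (Int_part x + 1))).

(* Main.v *)
Require Import Defs.
From Stdlib Require Import Reals Lra Lia Arith List ZArith.
From Stdlib Require Import Znumtheory Classical.
Import ListNotations.

Open Scope nat_scope.

Lemma coprime_mul (a b c : nat) : Nat.gcd a c = 1%nat -> Nat.gcd b c = 1%nat -> Nat.gcd (a*b) c = 1%nat.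
Proof.
  intros Ha Hb. set (g := Nat.gcd (a*b) c).
  assert (Hgc : Nat.divide g c) by apply Nat.gcd_divide_r.
  assert (Hgab : Nat.divide g (a*b)) by apply Nat.gcd_divide_l.
  assert (Hga : Nat.gcd g a = 1%nat).
  { apply Nat.divide_1_r. rewrite <- Ha. apply Nat.gcd_greatest.
    - apply Nat.gcd_divide_r.
    - eapply Nat.divide_trans; [apply Nat.gcd_divide_l| exact Hgc]. }
  assert (Hgb : Nat.divide g b) by (eapply Nat.gauss; eauto).
  apply Nat.divide_1_r. rewrite <- Hb. apply Nat.gcd_greatest; auto.
Qed.

Lemma coprime_pow (a c e : nat) : Nat.gcd a c = 1%nat -> Nat.gcd (a^e) c = 1%nat.
Proof.
  intros H. induction e as [|e IH]; simpl.
  - apply Nat.divide_1_r. apply (Nat.gcd_divide_l 1 c).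
  - apply coprime_mul; auto.
Qed.

Lemma nat_Z_divide (a b : nat) : (Z.of_nat a | Z.of_nat b)%Z -> Nat.divide a b.
Proof.
  intros [z Hz]. destruct (Nat.eq_dec a 0) as [->|Ha].
  - simpl in Hz. exists 0%nat. lia.
  - assert (z >= 0)%Z by nia. exists (Z.to_nat z). apply Nat2Z.inj. rewrite Nat2Z.inj_mul, Z2Nat.id; lia.
Qed.

Lemma gcd_nat_Z (a b : nat) : Nat.gcd a b = 1%nat -> Z.gcd (Z.of_nat a) (Z.of_nat b) = 1%Z.
Proof.
  intros H. set (g := Z.gcd (Z.of_nat a) (Z.of_nat b)).
  assert (Hg0 : (0 <= g)%Z) by apply Z.gcd_nonneg.
  assert (Hd : Nat.divide (Z.to_nat g) (Nat.gcd a b)).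
  { apply Nat.gcd_greatest; apply nat_Z_divide; rewrite Z2Nat.id by lia;
    [apply Z.gcd_divide_l | apply Z.gcd_divide_r]. }
  rewrite H in Hd. apply Nat.divide_1_r in Hd. lia.
Qed.

Lemma cancel_pow (q x x' a a' : nat) : (1 < q)%nat -> Nat.gcd x q = 1%nat -> Nat.gcd x' q = 1%nat ->
  x * q^a = x' * q^a' -> a = a' /\ x = x'.
Proof.
  intros Hq Hx Hx' E.
  assert (Hpos : forall e, (0 < q^e)%nat) by (intros; apply Nat.neq_0_lt_0, Nat.pow_nonzero; lia).
  assert (key : forall x x' a a', Nat.gcd x q = 1%nat -> (a < a')%nat -> x * q^a = x' * q^a' -> False).
  { clear a a' E Hx Hx' x x'. intros x x' a a' Hx Hlt E.
    replace a' with (a + (a' - a))%nat in E by lia. rewrite Nat.pow_add_r in E.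
    assert (E2 : x = x' * q^(a'-a)).
    { apply (Nat.mul_cancel_r _ _ (q^a)). specialize (Hpos a); lia. rewrite E. ring. }
    assert (Nat.divide q x).
    { rewrite E2. destruct (a' - a)%nat eqn:Ed; [lia|]. simpl. exists (x' * q^n)%nat. ring. }
    assert (Nat.gcd x q = q) by (rewrite Nat.gcd_comm; apply Nat.divide_gcd_iff; auto).
    lia. }
  destruct (lt_eq_lt_dec a a') as [[Hlt|Heq]|Hgt].
  - exfalso; apply (key x x' a a' Hx Hlt E).
  - subst. split; auto. apply (Nat.mul_cancel_r _ _ (q^a')). specialize (Hpos a'); lia. exact E.
  - exfalso; eapply key; [exact Hx'|exact Hgt|]. symmetry; exact E.
Qed.

Open Scope nat_scope.

Definition upd (f : nat -> nat) (j a : nat) : nat -> nat := fun l => if Nat.eqb l j then a else f l.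

Lemma prod_pow_ext p a b n : (forall l, 1 <= l <= n -> a l = b l) -> prod_pow p a n = prod_pow p b n.
Proof.
  induction n as [|n IH]; intros H; simpl; auto.
  rewrite IH by (intros; apply H; lia). rewrite (H (S n)) by lia. reflexivity.
Qed.

Lemma prod_pow_upd p al j a n : 1 <= j <= n ->
  prod_pow p (upd al j a) n = p j ^ a * prod_pow p (upd al j 0) n.
Proof.
  induction n as [|n IH]; intros Hj; [lia|]. simpl.
  destruct (Nat.eq_dec j (S n)) as [->|Hne].
  - unfold upd at 2 4. rewrite Nat.eqb_refl. simpl.
    rewrite (prod_pow_ext p (upd al (S n) a) (upd al (S n) 0) n).
    + ring.
    + intros l Hl. unfold upd. destruct (Nat.eqb_spec l (S n)); [lia|auto].
  - rewrite IH by lia. unfold upd at 2 4. destruct (Nat.eqb_spec (S n) j); [lia|]. ring.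
Qed.

Lemma prod_pow_split p al j n : 1 <= j <= n ->
  prod_pow p al n = p j ^ al j * prod_pow p (upd al j 0) n.
Proof.
  intros Hj. rewrite <- prod_pow_upd by auto. apply prod_pow_ext.
  intros l _. unfold upd. destruct (Nat.eqb_spec l j); subst; auto.
Qed.

Lemma prod_pow_coprime p al n q : (forall l, 1 <= l <= n -> al l = 0 \/ Nat.gcd (p l) q = 1) ->
  Nat.gcd (prod_pow p al n) q = 1.
Proof.
  induction n as [|n IH]; intros H; simpl.
  - apply Nat.divide_1_r. apply (Nat.gcd_divide_l 1 q).
  - apply coprime_mul. apply IH; intros; apply H; lia.
    destruct (H (S n)) as [E|E]; [lia| |].
    + rewrite E. simpl. apply Nat.divide_1_r. apply (Nat.gcd_divide_l 1 q).
    + apply coprime_pow; auto.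
Qed.

Lemma prod_pow_pos p al n : (forall l, 1 <= l <= n -> 0 < p l) -> 0 < prod_pow p al n.
Proof.
  induction n as [|n IH]; intros H; simpl; auto.
  apply Nat.mul_pos_pos. apply IH; intros; apply H; lia.
  apply Nat.neq_0_lt_0, Nat.pow_nonzero. specialize (H (S n)); lia.
Qed.

Fixpoint ssum (al : nat -> nat) (n : nat) : nat :=
  match n with O => 0 | S n' => ssum al n' + al n end.

Lemma prod_pow_bound p al n Q : (forall l, 1 <= l <= n -> p l <= Q) ->
  prod_pow p al n <= Q ^ ssum al n.
Proof.
  induction n as [|n IH]; intros H; simpl; auto.
  rewrite Nat.pow_add_r. apply Nat.mul_le_mono. apply IH; intros; apply H; lia.
  apply Nat.pow_le_mono_l. apply H; lia.
Qed.

Lemma prod_pow_one p al n : (forall l, 1 <= l <= n -> al l = 0) -> prod_pow p al n = 1.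
Proof.
  induction n as [|n IH]; intros H; simpl; auto.
  rewrite IH by (intros; apply H; lia). rewrite H by lia. simpl. lia.
Qed.

Lemma prod_pow_lt p al j a n : 1 <= j <= n -> (forall l, 1 <= l <= n -> 1 < p l) -> a < al j ->
  prod_pow p (upd al j a) n < prod_pow p al n.
Proof.
  intros Hj Hp Ha. rewrite prod_pow_upd by auto. rewrite (prod_pow_split p al j n) by auto.
  assert (0 < prod_pow p (upd al j 0) n) by (apply prod_pow_pos; intros l Hl; specialize (Hp l Hl); lia).
  apply Nat.mul_lt_mono_pos_r; auto. apply Nat.pow_lt_mono_r; auto.
Qed.

Open Scope nat_scope.

Definition layer (q : nat) (xs : list nat) (n : nat) : list nat :=
  flat_map (fun x => map (fun a => x * q ^ a) (seq 0 n)) xs.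

Fixpoint Lst (p bd : nat -> nat) (n : nat) : list nat :=
  match n with O => [1] | S n' => layer (p n) (Lst p bd n') (bd n) end.

Fixpoint pb (bd : nat -> nat) (n : nat) : nat :=
  match n with O => 1 | S n' => pb bd n' * bd n end.

Lemma in_layer q xs n z : In z (layer q xs n) <-> exists x a, In x xs /\ a < n /\ z = x * q ^ a.
Proof.
  unfold layer. rewrite in_flat_map. split.
  - intros [x [Hx Hz]]. apply in_map_iff in Hz. destruct Hz as [a [Ha Hin]].
    apply in_seq in Hin. exists x, a. repeat split; auto; lia.
  - intros [x [a [Hx [Ha ->]]]]. exists x. split; auto. apply in_map_iff. exists a. split; auto.
    apply in_seq. lia.
Qed.

Lemma length_layer q xs n : length (layer q xs n) = length xs * n.
Proof.
  induction xs as [|x xs IH]; simpl; auto.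
  unfold layer in *. simpl. rewrite length_app, length_map, length_seq, IH. lia.
Qed.

Lemma NoDup_layer q xs n : 1 < q -> NoDup xs -> (forall x, In x xs -> Nat.gcd x q = 1) ->
  NoDup (layer q xs n).
Proof.
  intros Hq Hnd Hc. induction Hnd as [|x xs Hnin Hnd IH]; simpl.
  - constructor.
  - unfold layer; simpl. apply NoDup_app.
    + apply NoDup_map_NoDup_ForallPairs. 2: apply seq_NoDup.
      intros a a' _ _ E. apply (cancel_pow q x x a a'); auto; apply Hc; simpl; auto.
    + apply IH. intros; apply Hc; simpl; auto.
    + intros z Hz Hz'. apply in_map_iff in Hz. destruct Hz as [a [<- _]].
      fold (layer q xs n) in Hz'. apply in_layer in Hz'. destruct Hz' as [x' [a' [Hx' [_ E]]]].
      destruct (cancel_pow q x x' a a') as [_ E2]; auto.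
      apply Hc; simpl; auto. apply Hc; simpl; auto. subst. contradiction.
Qed.

Lemma Lst_in p bd n t : In t (Lst p bd n) ->
  exists al, (forall l, 1 <= l <= n -> al l < bd l) /\ t = prod_pow p al n.
Proof.
  revert t. induction n as [|n IH]; intros t Ht; simpl in Ht.
  - destruct Ht as [<-|[]]. exists (fun _ => 0). split; [intros; lia | reflexivity].
  - apply in_layer in Ht. destruct Ht as [x [a [Hx [Ha ->]]]].
    destruct (IH x Hx) as [al [Hal ->]].
    exists (upd al (S n) a). split.
    + intros l Hl. unfold upd. destruct (Nat.eqb_spec l (S n)); subst; auto. apply Hal; lia.
    + simpl. f_equal.
      * apply prod_pow_ext. intros l Hl. unfold upd. destruct (Nat.eqb_spec l (S n)); auto; lia.
      * unfold upd. rewrite Nat.eqb_refl. auto.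
Qed.

Lemma Lst_length p bd n : length (Lst p bd n) = pb bd n.
Proof.
  induction n as [|n IH]; simpl; auto. rewrite length_layer, IH. auto.
Qed.

Lemma Lst_NoDup p bd n m : n <= m -> (forall l, 1 <= l <= m -> 1 < p l) ->
  (forall i j, 1 <= i <= m -> 1 <= j <= m -> i <> j -> Nat.gcd (p i) (p j) = 1) ->
  NoDup (Lst p bd n).
Proof.
  intros Hn Hp Hc. induction n as [|n IH]; simpl.
  - constructor; [simpl; auto| constructor].
  - apply NoDup_layer. apply Hp; lia. apply IH; lia.
    intros x Hx. destruct (Lst_in p bd n x Hx) as [al [_ ->]].
    apply prod_pow_coprime. intros l Hl. right. apply Hc; lia.
Qed.

Lemma filter_seq_one (g : nat -> bool) s W : (exists i, s <= i < s + W /\ g i = true) ->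
  1 <= length (filter g (seq s W)).
Proof.
  intros [i [Hi Hg]].
  assert (In i (filter g (seq s W))) by (apply filter_In; split; auto; apply in_seq; lia).
  destruct (filter g (seq s W)); simpl in *; [contradiction|lia].
Qed.

Lemma filter_seq_windows (g : nat -> bool) W nw n : nw * W <= n ->
  (forall w, w < nw -> exists i, w * W <= i < w * W + W /\ g i = true) ->
  nw <= length (filter g (seq 0 n)).
Proof.
  revert n. induction nw as [|nw IH]; intros n Hn Hw; [lia|].
  replace n with (nw * W + (W + (n - S nw * W))) by (simpl in Hn; lia).
  rewrite seq_app, filter_app, length_app. simpl.
  rewrite seq_app, filter_app, length_app.
  assert (nw <= length (filter g (seq 0 (nw * W)))) by (apply IH; auto).
  assert (1 <= length (filter g (seq (0 + nw * W) W))).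
  { apply filter_seq_one. simpl. apply Hw; lia. }
  simpl in *. lia.
Qed.

Lemma filter_map_len (g : nat -> bool) (f : nat -> nat) l :
  length (filter g (map f l)) = length (filter (fun i => g (f i)) l).
Proof. induction l as [|a l IH]; simpl; auto. destruct (g (f a)); simpl; auto. Qed.

Lemma filter_layer_len (g : nat -> bool) q xs n W nw : nw * W <= n ->
  (forall x w, In x xs -> w < nw -> exists i, w * W <= i < w * W + W /\ g (x * q ^ i) = true) ->
  length xs * nw <= length (filter g (layer q xs n)).
Proof.
  intros Hn H. induction xs as [|x xs IH]; simpl; [lia|].
  unfold layer; simpl. rewrite filter_app, length_app. fold (layer q xs n).
  rewrite filter_map_len.
  assert (nw <= length (filter (fun i => g (x * q ^ i)) (seq 0 n))).
  { apply filter_seq_windows with W; auto. intros; apply H; simpl; auto. }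
  assert (length xs * nw <= length (filter g (layer q xs n))) by (apply IH; intros; apply H; simpl; auto).
  lia.
Qed.

Open Scope R_scope.

Lemma IZR_abs_ge1 (z : Z) : z <> 0%Z -> 1 <= Rabs (IZR z).
Proof.
  intros H. destruct (Z_lt_le_dec z 0) as [Hl|Hl].
  - assert (IZR z <= -1) by (apply IZR_le; lia). rewrite Rabs_left by lra. lra.
  - assert (1 <= IZR z) by (apply IZR_le; lia). rewrite Rabs_right by lra. lra.
Qed.

Lemma dist_le x (z : Z) : dist_nint x <= Rabs (x - IZR z).
Proof.
  unfold dist_nint. destruct (base_Int_part x) as [H1 H2]. set (f := Int_part x) in *.
  destruct (Z_le_gt_dec z f) as [Hz|Hz].
  - apply Rle_trans with (Rabs (x - IZR f)); [apply Rmin_l|].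
    assert (IZR z <= IZR f) by (apply IZR_le; lia).
    rewrite !Rabs_right by lra. lra.
  - apply Rle_trans with (Rabs (x - IZR (f + 1))); [apply Rmin_r|].
    assert (IZR (f+1) <= IZR z) by (apply IZR_le; lia).
    rewrite plus_IZR in *. rewrite !Rabs_left1 by lra. lra.
Qed.

Lemma dist_ex x : exists z : Z, dist_nint x = Rabs (x - IZR z).
Proof.
  unfold dist_nint. unfold Rmin. destruct (Rle_dec _ _); eauto.
Qed.

Lemma dist_ge x d : (forall z : Z, d <= Rabs (x - IZR z)) -> d <= dist_nint x.
Proof. intros H. destruct (dist_ex x) as [z ->]. auto. Qed.

Lemma dist_nonneg x : 0 <= dist_nint x.
Proof. apply dist_ge. intros; apply Rabs_pos. Qed.

Lemma dist_mul (q : nat) x : (1 <= q)%nat -> dist_nint x < 1 / (3 * INR q) ->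
  INR q * dist_nint x <= dist_nint (INR q * x).
Proof.
  intros Hq Hd. assert (Hq' : 1 <= INR q) by (apply (le_INR 1); auto).
  destruct (dist_ex x) as [n Hn].
  assert (Hqd : INR q * dist_nint x < 1/3).
  { apply Rmult_lt_compat_l with (r := INR q) in Hd; [|lra].
    replace (INR q * (1 / (3 * INR q))) with (1/3) in Hd by (field; lra). lra. }
  apply dist_ge. intros z.
  destruct (Z.eq_dec z (Z.of_nat q * n)) as [->|Hne].
  - rewrite mult_IZR, <- INR_IZR_INZ. rewrite Hn.
    replace (INR q * x - INR q * IZR n) with (INR q * (x - IZR n)) by ring.
    rewrite Rabs_mult, (Rabs_right (INR q)) by lra. lra.
  - assert (H1 : 1 <= Rabs (IZR (Z.of_nat q * n - z))) by (apply IZR_abs_ge1; lia).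
    rewrite minus_IZR, mult_IZR, <- INR_IZR_INZ in H1.
    assert (Rabs (INR q * x - INR q * IZR n) = INR q * dist_nint x).
    { rewrite Hn. replace (INR q * x - INR q * IZR n) with (INR q * (x - IZR n)) by ring.
      rewrite Rabs_mult, (Rabs_right (INR q)) by lra. lra. }
    assert (Rabs (INR q * IZR n - IZR z) <= Rabs (INR q * IZR n - INR q * x) + Rabs (INR q * x - IZR z)).
    { replace (INR q * IZR n - IZR z) with ((INR q * IZR n - INR q * x) + (INR q * x - IZR z)) by ring.
      apply Rabs_triang. }
    rewrite (Rabs_minus_sym (INR q * IZR n) (INR q * x)) in H0. lra.
Qed.

Lemma window (q : nat) x d W : (1 <= q)%nat -> 0 < d -> (1 <= W)%nat -> d <= dist_nint x ->
  1/3 <= INR q ^ W * d -> exists i, (i < W)%nat /\ dist_nint (INR q ^ i * x) >= 1 / (3 * INR q).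
Proof.
  intros Hq Hd HW Hx HqW. assert (Hq' : 1 <= INR q) by (apply (le_INR 1); auto).
  apply NNPP. intros Hno.
  assert (Hall : forall i, (i < W)%nat -> dist_nint (INR q ^ i * x) < 1 / (3 * INR q)).
  { intros i Hi. apply Rnot_ge_lt. intros Hge. apply Hno. exists i; auto. }
  assert (Hgrow : forall i, (i < W)%nat -> INR q ^ i * d <= dist_nint (INR q ^ i * x)).
  { induction i as [|i IH]; intros Hi.
    - simpl. rewrite !Rmult_1_l. auto.
    - simpl. rewrite !Rmult_assoc. apply Rle_trans with (INR q * dist_nint (INR q ^ i * x)).
      + apply Rmult_le_compat_l; [lra|]. apply IH; lia.
      + apply dist_mul; auto. apply Hall; lia. }
  assert (Hlast := Hgrow (W - 1)%nat ltac:(lia)). assert (Hl2 := Hall (W - 1)%nat ltac:(lia)).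
  replace W with (S (W - 1)) in HqW by lia. simpl in HqW.
  assert (INR q * (INR q ^ (W - 1) * d) < INR q * (1 / (3 * INR q))).
  { apply Rmult_lt_compat_l; lra. }
  replace (INR q * (1 / (3 * INR q))) with (1/3) in H by (field; lra). lra.
Qed.

Open Scope nat_scope.

Lemma B_div (p : nat -> nat) m (Hp : forall l, 1 <= l <= m -> 1 < p l)
  (Hcop : forall i j, 1 <= i <= m -> 1 <= j <= m -> i <> j -> Nat.gcd (p i) (p j) = 1)
  be ga j (n0 : Z) : 1 <= j <= m -> ga j < be j ->
  (Z.of_nat (prod_pow p be m) | Z.of_nat (prod_pow p ga m) * n0)%Z ->
  (Z.of_nat (prod_pow p be m) | Z.of_nat (prod_pow p (upd be j (ga j)) m) * n0)%Z.
Proof.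
  intros Hj Hlt Hd.
  set (a := ga j) in *. set (b := be j) in *.
  set (R := prod_pow p (upd be j 0) m). set (H := prod_pow p (upd ga j 0) m).
  assert (Et0 : prod_pow p be m = p j ^ a * p j ^ (b - a) * R).
  { rewrite (prod_pow_split p be j m Hj). fold b. fold R. rewrite <- Nat.pow_add_r.
    replace (a + (b - a)) with b by lia. ring. }
  assert (Eh : prod_pow p ga m = p j ^ a * H) by (apply prod_pow_split; auto).
  assert (Eh' : prod_pow p (upd be j a) m = p j ^ a * R) by (apply prod_pow_upd; auto).
  assert (HcH : Nat.gcd (p j ^ (b - a)) H = 1).
  { apply coprime_pow. rewrite Nat.gcd_comm. apply prod_pow_coprime.
    intros l Hl. unfold upd. destruct (Nat.eqb_spec l j); [left; auto | right; apply Hcop; lia]. }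
  apply gcd_nat_Z in HcH.
  rewrite Et0, Eh in Hd. rewrite Et0, Eh'.
  rewrite !Nat2Z.inj_mul in *.
  set (A := Z.of_nat (p j ^ a)) in *. set (E := Z.of_nat (p j ^ (b - a))) in *.
  set (Rz := Z.of_nat R) in *. set (Hz := Z.of_nat H) in *.
  assert (HA : A <> 0%Z).
  { unfold A. assert (0 < p j ^ a) by (apply Nat.neq_0_lt_0, Nat.pow_nonzero; specialize (Hp j Hj); lia). lia. }
  assert (Hd2 : (A * E | A * (Hz * n0))%Z).
  { apply Z.divide_trans with (A * E * Rz)%Z. exists Rz. ring.
    replace (A * (Hz * n0))%Z with (A * Hz * n0)%Z by ring. exact Hd. }
  apply Z.mul_divide_cancel_l in Hd2; auto.
  apply Z.gauss in Hd2; auto. destruct Hd2 as [c ->].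
  exists c. ring.
Qed.

Open Scope R_scope.

Lemma B1_lemma (t0 h : nat) (n0 : Z) y : (0 < t0)%nat ->
  (Z.of_nat t0 | Z.of_nat h * n0)%Z ->
  dist_nint (INR h * y) <= INR h * Rabs (INR t0 * y - IZR n0) / INR t0.
Proof.
  intros Ht [c Hc]. assert (Ht' : 0 < INR t0) by (apply lt_0_INR; auto).
  apply IZR_eq in Hc. rewrite mult_IZR, mult_IZR, <- !INR_IZR_INZ in Hc.
  apply Rle_trans with (Rabs (INR h * y - IZR c)); [apply dist_le|].
  replace (INR h * y - IZR c) with (INR h * (INR t0 * y - IZR n0) / INR t0).
  - unfold Rdiv. rewrite !Rabs_mult, Rabs_right by (apply Rle_ge, pos_INR).
    rewrite (Rabs_right (/ INR t0)) by (apply Rle_ge, Rlt_le, Rinv_0_lt_compat; auto). lra.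
  - field_simplify; [|lra]. rewrite Hc. field. lra.
Qed.

Lemma B2_lemma (t0 h : nat) (n0 : Z) y : (0 < t0)%nat ->
  ~ (Z.of_nat t0 | Z.of_nat h * n0)%Z ->
  INR h * Rabs (INR t0 * y - IZR n0) <= 1/4 ->
  1 / (2 * INR t0) <= dist_nint (INR h * y).
Proof.
  intros Ht Hnd Hs. assert (Ht' : 0 < INR t0) by (apply lt_0_INR; auto).
  apply dist_ge. intros z.
  assert (Hne : (Z.of_nat h * n0 - z * Z.of_nat t0)%Z <> 0%Z).
  { intros E. apply Hnd. exists z. lia. }
  apply IZR_abs_ge1 in Hne. rewrite minus_IZR, !mult_IZR, <- !INR_IZR_INZ in Hne.
  set (d := INR t0 * y - IZR n0) in *.
  assert (E : INR h * y - IZR z = ((INR h * IZR n0 - IZR z * INR t0) + INR h * d) / INR t0).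
  { unfold d. field. lra. }
  rewrite E. unfold Rdiv. rewrite Rabs_mult.
  rewrite (Rabs_right (/ INR t0)) by (apply Rle_ge, Rlt_le, Rinv_0_lt_compat; auto).
  assert (Rabs (INR h * d) <= 1/4) by (rewrite Rabs_mult, Rabs_right by (apply Rle_ge, pos_INR); auto).
  assert (T : Rabs (INR h * IZR n0 - IZR z * INR t0) <=
     Rabs ((INR h * IZR n0 - IZR z * INR t0) + INR h * d) + Rabs (INR h * d)).
  { replace (INR h * IZR n0 - IZR z * INR t0) with (((INR h * IZR n0 - IZR z * INR t0) + INR h * d) + - (INR h * d)) at 1 by ring.
    rewrite <- (Rabs_Ropp (INR h * d)). apply Rabs_triang. }
  assert (1/2 <= Rabs (INR h * IZR n0 - IZR z * INR t0 + INR h * d)) by lra.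
  apply Rmult_le_compat_r with (r := / INR t0) in H0; [|apply Rlt_le, Rinv_0_lt_compat; auto].
  replace (1 * / (2 * INR t0)) with (1/2 * / INR t0) by (field; lra). exact H0.
Qed.

Open Scope nat_scope.

Definition bdf (j u k : nat) (l : nat) : nat :=
  if Nat.eqb l 1 then 1 else if Nat.eqb l j then u else k.

Lemma pb_A k n : 1 <= n -> pb (bdf 0 0 k) n = k ^ (n - 1).
Proof.
  induction n as [|n IH]; intros Hn; [lia|]. simpl pb.
  destruct n as [|n]; [reflexivity|].
  rewrite IH by lia. unfold bdf. simpl. replace (n - 0) with n by lia. ring.
Qed.

Lemma pb_ext bd bd' n : (forall l, 1 <= l <= n -> bd l = bd' l) -> pb bd n = pb bd' n.
Proof.
  induction n as [|n IH]; intros H; simpl; auto. rewrite IH by (intros; apply H; lia).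
  rewrite H by lia. auto.
Qed.

Lemma pb_B j u k n : 2 <= j <= n -> pb (bdf j u k) n = u * k ^ (n - 2).
Proof.
  induction n as [|n IH]; intros Hn; [lia|]. simpl pb.
  destruct (Nat.eq_dec j (S n)) as [->|Hne].
  - rewrite (pb_ext _ (bdf 0 0 k)).
    + rewrite pb_A by lia. unfold bdf. destruct (Nat.eqb_spec (S n) 1); [lia|]. rewrite Nat.eqb_refl.
      replace (S n - 2) with (n - 1) by lia. ring.
    + intros l Hl. unfold bdf. destruct (Nat.eqb_spec l 1); auto. destruct (Nat.eqb_spec l (S n)); [lia|].
      destruct (Nat.eqb_spec l 0); [lia|auto].
  - rewrite IH by lia. unfold bdf. destruct (Nat.eqb_spec (S n) 1); [lia|].
    destruct (Nat.eqb_spec (S n) j); [lia|].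
    replace (S n - 2) with (S (n - 2)) by lia. simpl. ring.
Qed.

Lemma ssum_le al n K : 1 <= n -> al 1 = 0 -> (forall l, 2 <= l <= n -> al l <= K) ->
  ssum al n + K <= n * K.
Proof.
  induction n as [|n IH]; intros Hn H1 Hl; [lia|]. simpl ssum.
  destruct n as [|n]; [simpl; lia|].
  assert (ssum al (S n) + K <= S n * K) by (apply IH; [lia|auto|intros; apply Hl; lia]).
  specialize (Hl (S (S n)) ltac:(lia)). nia.
Qed.

Lemma min_exists (P : nat -> Prop) : (exists n, P n) -> exists n, P n /\ forall m, m < n -> ~ P m.
Proof.
  intros [n Hn]. revert Hn. induction n as [n IH] using (well_founded_induction lt_wf). intros Hn.
  destruct (classic (exists m, m < n /\ P m)) as [[m [Hm Pm]]|Hno].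
  - apply (IH m Hm Pm).
  - exists n. split; auto. intros m Hm Pm. apply Hno. eauto.
Qed.

Lemma argmax (be : nat -> nat) m : 2 <= m -> exists j, 2 <= j <= m /\ forall l, 2 <= l <= m -> be l <= be j.
Proof.
  induction m as [|m IH]; intros Hm; [lia|].
  destruct (Nat.eq_dec m 1) as [->|Hm1].
  - exists 2. split; [lia|]. intros l Hl. replace l with 2 by lia. lia.
  - destruct IH as [j [Hj Hmax]]; [lia|].
    destruct (le_lt_dec (be (S m)) (be j)) as [Hle|Hlt].
    + exists j. split; [lia|]. intros l Hl. destruct (Nat.eq_dec l (S m)); [subst; auto|]. apply Hmax; lia.
    + exists (S m). split; [lia|]. intros l Hl. destruct (Nat.eq_dec l (S m)); [subst; auto|].
      specialize (Hmax l ltac:(lia)). lia.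
Qed.

Lemma assemble (m : nat) (p bd : nat -> nat) (r y : R) (n nw W : nat)
  (Hp : forall l, 1 <= l <= m -> 1 < p l)
  (Hcop : forall i j, 1 <= i <= m -> 1 <= j <= m -> i <> j -> Nat.gcd (p i) (p j) = 1)
  (Hm : 1 <= m) (Hbd1 : bd 1 = 1) (Hn : nw * W <= n)
  (Hsize : forall t i, In t (Lst p bd m) -> i < n -> (INR (t * p 1%nat ^ i)%nat * r <= 1)%R)
  (Hwin : forall t w, In t (Lst p bd m) -> w < nw -> exists i, w * W <= i < w * W + W /\
       (dist_nint (INR (t * p 1%nat ^ i)%nat * y) >= 1 / (3 * INR (p 1%nat)))%R) :
  exists L : list nat, NoDup L /\
    (forall h, In h L -> inSr m p r h /\ (dist_nint (INR h * y) >= 1 / (3 * INR (p 1%nat)))%R) /\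
    pb bd m * nw <= length L.
Proof.
  set (g := fun h => if Rge_dec (dist_nint (INR h * y)) (1 / (3 * INR (p 1%nat))) then true else false).
  assert (Hal : forall t, In t (Lst p bd m) -> exists al, al 1 = 0 /\ t = prod_pow p al m).
  { intros t Ht. destruct (Lst_in p bd m t Ht) as [al [Hb ->]]. exists al. split; auto.
    specialize (Hb 1 ltac:(lia)). lia. }
  exists (filter g (layer (p 1) (Lst p bd m) n)). split; [|split].
  - apply NoDup_filter. apply NoDup_layer. apply Hp; lia. apply Lst_NoDup with m; auto.
    intros x Hx. destruct (Hal x Hx) as [al [H1 ->]]. apply prod_pow_coprime.
    intros l Hl. destruct (Nat.eq_dec l 1) as [->|]; [left; auto|right; apply Hcop; lia].
  - intros h Hh. apply filter_In in Hh. destruct Hh as [Hh Hg].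
    unfold g in Hg. destruct (Rge_dec _ _) as [Hge|]; [|discriminate].
    split; auto. apply in_layer in Hh. destruct Hh as [t [i [Ht [Hi ->]]]].
    split; [|apply Hsize; auto].
    destruct (Hal t Ht) as [al [H1 ->]]. exists (upd al 1 i).
    rewrite (prod_pow_upd p al 1 i m) by lia. rewrite Nat.mul_comm. f_equal.
    apply prod_pow_ext. intros l Hl. unfold upd. destruct (Nat.eqb_spec l 1); subst; auto.
  - rewrite <- (Lst_length p bd m). apply filter_layer_len with W; auto.
    intros x w Hx Hw. destruct (Hwin x w Hx Hw) as [i [Hi Hd]]. exists i. split; auto.
    unfold g. destruct (Rge_dec _ _); auto.
Qed.

Open Scope R_scope.

Lemma powexp Q n : 0 < Q -> Q ^ n = exp (INR n * ln Q).
Proof. intros HQ. rewrite <- Rpower_pow by auto. reflexivity. Qed.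

Lemma cube_lt a b : 0 <= a -> 0 < b -> a ^ 3 < b ^ 3 -> a < b.
Proof.
  intros Ha Hb H. destruct (Rlt_le_dec a b) as [|Hle]; auto.
  exfalso. assert (b ^ 3 <= a ^ 3) by (apply pow_incr; lra). lra.
Qed.

Lemma cube_le a b : 0 <= a -> 0 < b -> a ^ 3 <= b ^ 3 -> a <= b.
Proof.
  intros Ha Hb H. destruct (Rle_lt_dec a b) as [|Hlt]; auto.
  exfalso. assert (b ^ 3 < a ^ 3).
  { simpl. rewrite !Rmult_1_r. assert (0 < b*b) by nra. assert (b * b < a * a) by nra. nra. }
  lra.
Qed.

Lemma Rpower_23 r : 0 < r -> (Rpower r (2/3)) ^ 3 = r ^ 2.
Proof.
  intros Hr. rewrite <- Rpower_pow by (apply exp_pos).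
  rewrite Rpower_mult. rewrite <- Rpower_pow by auto. f_equal. simpl. field.
Qed.

Lemma pow_INR_lt (q a b : nat) : (1 < q)%nat -> (a <= b)%nat -> INR q ^ a <= INR q ^ b.
Proof. intros Hq Hab. apply Rle_pow; auto. apply (lt_INR 1) in Hq. simpl in Hq. lra. Qed.

Lemma exp_le_mono a b : a <= b -> exp a <= exp b.
Proof. intros H. destruct (Rle_lt_or_eq_dec a b H) as [H1|H1]; [apply Rlt_le, exp_increasing; auto|subst; lra]. Qed.

Lemma final_ineq (len k m : nat) lam ell : 0 < lam -> 0 <= ell -> ell / (2 * lam) <= INR k ->
  (k ^ (m - 1) <= 2 * len)%nat -> INR len >= (/ (2 * lam)) ^ (m - 1) / 2 * ell ^ (m - 1).
Proof.
  intros Hl He Hk Hn. apply le_INR in Hn. rewrite mult_INR, pow_INR in Hn. simpl (INR 2) in Hn.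
  assert ((ell / (2 * lam)) ^ (m - 1) <= INR k ^ (m - 1)).
  { apply pow_incr. split; auto. apply Rmult_le_pos; auto. apply Rlt_le, Rinv_0_lt_compat; lra. }
  unfold Rdiv in H. rewrite Rpow_mult_distr in H.
  apply Rle_ge. replace ((/ (2 * lam)) ^ (m - 1) / 2 * ell ^ (m - 1)) with ((ell ^ (m - 1) * (/ (2 * lam)) ^ (m - 1)) / 2) by (field).
  lra.
Qed.

Open Scope R_scope.

Theorem mainTheorem10 (m : nat) (p : nat -> nat)
  (Hm : (2 <= m)%nat)
  (Hp1 : (1 < p 1%nat)%nat)
  (Hinc : forall i j, (1 <= i)%nat -> (i < j)%nat -> (j <= m)%nat -> (p i < p j)%nat)
  (Hcop : forall i j, (1 <= i <= m)%nat -> (1 <= j <= m)%nat -> i <> j ->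
          Nat.gcd (p i) (p j) = 1%nat) :
  exists c rstar : R, 0 < c /\ 0 < rstar /\
    forall r y : R, 0 < r -> r < rstar ->
      Rpower r (2/3) < Rabs y -> Rabs y <= 1/2 ->
      exists L : list nat, NoDup L /\
        (forall h, In h L -> inSr m p r h /\ dist_nint (INR h * y) >= 1 / (3 * INR (p 1%nat))) /\
        INR (length L) >= c * (ln (1 / r)) ^ (m - 1).
Proof.
  set (q := p 1%nat).
  set (P := p m).
  set (s := (P * (m - 1))%nat).
  assert (Hp : forall l, (1 <= l <= m)%nat -> (1 < p l)%nat).
  { intros l Hl. destruct (Nat.eq_dec l 1) as [->|]; auto. specialize (Hinc 1%nat l). lia. }
  assert (HPl : forall l, (1 <= l <= m)%nat -> (p l <= P)%nat).
  { intros l Hl. destruct (Nat.eq_dec l m) as [->|]; [unfold P; lia|]. specialize (Hinc l m). unfold P; lia. }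
  assert (Hq2 : (2 <= q)%nat) by (unfold q; lia).
  assert (HP1 : (1 < P)%nat) by (apply Hp; lia).
  assert (HPq : (P <= q ^ P)%nat) by (apply Nat.lt_le_incl, Nat.pow_gt_lin_r; lia).
  assert (Hs : (1 <= s)%nat) by (unfold s; nia).
  set (Q := INR q).
  assert (HQ : 2 <= Q) by (unfold Q; apply (le_INR 2) in Hq2; simpl in Hq2; lra).
  assert (HlnQ : 0 < ln Q) by (rewrite <- ln_1; apply ln_increasing; lra).
  assert (HsR : 1 <= INR s) by (apply (le_INR 1) in Hs; simpl in Hs; lra).
  set (lam := 3 * INR s * ln Q).
  assert (Hlam : 0 < lam) by (unfold lam; apply Rmult_lt_0_compat; lra).
  exists ((/ (2 * lam)) ^ (m - 1) / 2), (exp (- (4 * lam))).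
  split; [|split; [apply exp_pos|]].
  { apply Rmult_lt_0_compat; [apply pow_lt, Rinv_0_lt_compat; lra|lra]. }
  intros r y Hr Hrs Hy1 Hy2.
  set (N := 1 / r). set (ell := ln (1 / r)).
  assert (HN0 : 0 < N) by (unfold N; apply Rdiv_lt_0_compat; lra).
  assert (HN : N = exp ell) by (unfold ell; fold N; rewrite exp_ln; auto).
  assert (Hell : 4 * lam < ell).
  { unfold ell. rewrite <- (ln_exp (4 * lam)). apply ln_increasing. apply exp_pos.
    replace (1 / r) with (/ r) by (unfold Rdiv; ring). rewrite <- (Rinv_inv (exp (4 * lam))).
    apply Rinv_lt_contravar. apply Rmult_lt_0_compat; auto. apply Rinv_0_lt_compat, exp_pos.
    rewrite <- exp_Ropp. auto. }
  set (x := ell / lam).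
  assert (Hx : 4 < x) by (unfold x; apply Rmult_lt_reg_r with lam; auto; unfold Rdiv; rewrite Rmult_assoc, Rinv_l; lra).
  destruct (base_Int_part x) as [Hi1 Hi2].
  assert (Hip : (4 <= Int_part x)%Z) by (apply le_IZR; assert (IZR 3 < IZR (Int_part x)) by lra;
     apply lt_IZR in H; apply IZR_le; lia).
  set (k0 := Z.to_nat (Int_part x)).
  assert (Hk0 : INR k0 = IZR (Int_part x)) by (unfold k0; rewrite INR_IZR_INZ, Z2Nat.id by lia; auto).
  assert (Hk04 : (4 <= k0)%nat) by (unfold k0; lia).
  set (k := (k0 - 1)%nat).
  assert (Hk1 : (1 <= k)%nat) by (unfold k; lia).
  assert (HkR : ell / (2 * lam) <= INR k).
  { unfold k. rewrite minus_INR by lia. simpl (INR 1). rewrite Hk0.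
    assert (ell / (2 * lam) = x / 2) by (unfold x; field; lra). lra. }
  assert (HN3 : Q ^ (3 * s * k0) <= N).
  { rewrite powexp by lra. rewrite HN. apply exp_le_mono. rewrite !mult_INR.
    replace (INR 3 * INR s * INR k0 * ln Q) with (INR k0 * lam) by (unfold lam; simpl; ring).
    rewrite Hk0. apply Rle_trans with (x * lam). apply Rmult_le_compat_r; lra.
    unfold x. field_simplify; lra. }
  assert (HN2 : N ^ 2 = exp (2 * ell)) by (rewrite HN; simpl; rewrite Rmult_1_r, <- exp_plus; f_equal; ring).
  assert (HexT : exists T, N ^ 2 <= Q ^ (3 * T)).
  { destruct (archimed (2 * ell / (3 * ln Q))) as [Ha1 _].
    assert (Hpos : 0 < 2 * ell / (3 * ln Q)) by (apply Rdiv_lt_0_compat; lra).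
    assert (Hup : (0 <= up (2 * ell / (3 * ln Q)))%Z) by (apply le_IZR; lra).
    exists (Z.to_nat (up (2 * ell / (3 * ln Q)))).
    rewrite HN2, powexp by lra. apply exp_le_mono. rewrite mult_INR, (INR_IZR_INZ (Z.to_nat _)), Z2Nat.id by lia.
    simpl (INR 3). apply Rle_trans with (3 * (2 * ell / (3 * ln Q)) * ln Q).
    - right. field. lra.
    - apply Rmult_le_compat_r; lra. }
  destruct (min_exists _ HexT) as [T [HT HTmin]].
  assert (HN1 : 1 < N) by (rewrite HN, <- exp_0; apply exp_increasing; lra).
  assert (HT1 : (1 <= T)%nat).
  { destruct T; [|lia]. simpl in HT. assert (1 < N ^ 2) by (simpl; nra). lra. }
  assert (HTlt : Q ^ (3 * (T - 1)) < N ^ 2) by (apply Rnot_le_lt; apply HTmin; lia).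
  assert (HT2 : (2 * s * k0 <= T)%nat).
  { destruct (le_lt_dec (2 * s * k0) T) as [|Hlt]; auto. exfalso.
    assert (Q ^ (3 * T) < Q ^ (3 * s * k0 * 2)) by (apply Rlt_pow; [lra|lia]).
    rewrite (pow_mult Q (3 * s * k0) 2) in H.
    assert ((Q ^ (3 * s * k0)) ^ 2 <= N ^ 2) by (apply pow_incr; split; [apply pow_le; lra|auto]).
    lra. }
  assert (HNbig : Q ^ (T - 1 + s * k) < N).
  { apply cube_lt; [apply pow_le; lra|lra|].
    rewrite <- pow_mult. replace ((T - 1 + s * k) * 3)%nat with (3 * (T - 1) + 3 * s * k)%nat by lia.
    rewrite pow_add.
    assert (Q ^ (3 * s * k) <= N).
    { apply Rle_trans with (Q ^ (3 * s * k0)); auto. apply Rle_pow; [lra|]. unfold k; nia. }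
    assert (0 < Q ^ (3 * s * k)) by (apply pow_lt; lra).
    assert (0 <= Q ^ (3 * (T - 1))) by (apply pow_le; lra).
    replace (N ^ 3) with (N ^ 2 * N) by ring. nra. }
  set (th := / Q ^ T).
  assert (Hth : 0 < th) by (unfold th; apply Rinv_0_lt_compat, pow_lt; lra).
  assert (HthQ : Q ^ T * th = 1) by (unfold th; field; apply pow_nonzero; lra).
  assert (Hthy : th < Rabs y).
  { apply Rle_lt_trans with (Rpower r (2/3)); auto.
    apply cube_le; [lra|apply exp_pos|]. rewrite Rpower_23 by auto.
    unfold th. rewrite pow_inv, <- pow_mult. rewrite Nat.mul_comm.
    replace (r ^ 2) with (/ N ^ 2) by (unfold N; field; lra).
    apply Rinv_le_contravar; auto. apply pow_lt; lra. }
  assert (H1nt : th <= dist_nint (INR 1 * y)).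
  { apply Rle_trans with (Rabs y); [lra|]. apply dist_ge. intros z. simpl (INR 1). rewrite Rmult_1_l.
    destruct (Z.eq_dec z 0) as [->|Hz]; [simpl; rewrite Rminus_0_r; lra|].
    apply IZR_abs_ge1 in Hz. rewrite Rabs_minus_sym.
    assert (Rabs (IZR z) - Rabs y <= Rabs (IZR z - y)) by apply Rabs_triang_inv. lra. }
  set (X0 := (q ^ (s * k))%nat).
  assert (Hsz : forall h, (h < q ^ (T - 1 + s * k))%nat -> INR h * r <= 1).
  { intros h Hh. apply lt_INR in Hh. rewrite pow_INR in Hh. fold Q in Hh.
    assert (INR h < / r) by (replace (/ r) with N by (unfold N; field; lra); lra).
    apply Rmult_lt_compat_r with (r := r) in H; auto. rewrite Rinv_l in H by lra. lra. }
  assert (Hbox : forall bd, bd 1%nat = 1%nat -> (forall l, (2 <= l <= m)%nat -> (bd l <= k)%nat) ->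
     forall t, In t (Lst p bd m) -> exists al, al 1%nat = 0%nat /\ (forall l, (1 <= l <= m)%nat -> (al l < bd l)%nat)
        /\ t = prod_pow p al m /\ (t < X0)%nat).
  { intros bd Hb1 Hbk t Ht. destruct (Lst_in p bd m t Ht) as [al [Hal ->]].
    assert (Ha1 : al 1%nat = 0%nat) by (specialize (Hal 1%nat ltac:(lia)); lia).
    exists al. split; [auto|split; [auto|split; [auto|]]].
    apply Nat.le_lt_trans with (P ^ ssum al m)%nat. apply prod_pow_bound; auto.
    assert (Hss : (ssum al m + (k - 1) <= m * (k - 1))%nat).
    { apply ssum_le; auto; [lia|]. intros l Hl. specialize (Hal l ltac:(lia)). specialize (Hbk l Hl). lia. }
    apply Nat.le_lt_trans with (P ^ ((m - 1) * (k - 1)))%nat.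
    { apply Nat.pow_le_mono_r; [lia|]. nia. }
    apply Nat.le_lt_trans with ((q ^ P) ^ ((m - 1) * (k - 1)))%nat.
    { apply Nat.pow_le_mono_l; auto. }
    rewrite <- Nat.pow_mul_r. unfold X0. apply Nat.pow_lt_mono_r; [lia|]. unfold s. nia. }
  destruct (classic (exists t, ((exists be, be 1%nat = 0%nat /\ t = prod_pow p be m) /\ (t < X0)%nat
       /\ dist_nint (INR t * y) < th))) as [HB|HA].
  2:{
    destruct (assemble m p (bdf 0 0 k) r y T 1 T Hp Hcop ltac:(lia) eq_refl ltac:(lia)) as [L [HL1 [HL2 HL3]]].
    - intros t i Ht Hi. apply Hsz.
      destruct (Hbox (bdf 0 0 k) eq_refl) with t as [al [_ [_ [_ Htx]]]]; auto.
      { intros l Hl. unfold bdf. destruct (Nat.eqb_spec l 1); [lia|]. destruct (Nat.eqb_spec l 0); lia. }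
      apply Nat.lt_le_trans with (X0 * q ^ i)%nat.
      + apply Nat.mul_lt_mono_pos_r; auto. apply Nat.neq_0_lt_0, Nat.pow_nonzero; lia.
      + unfold X0. rewrite <- Nat.pow_add_r. apply Nat.pow_le_mono_r; lia.
    - intros t w Ht Hw. replace w with 0%nat by lia.
      assert (Hnt : th <= dist_nint (INR t * y)).
      { apply Rnot_lt_le. intros Hlt. apply HA. exists t.
        destruct (Hbox (bdf 0 0 k) eq_refl) with t as [al [Ha1 [_ [Ht' Htx]]]]; auto.
        { intros l Hl. unfold bdf. destruct (Nat.eqb_spec l 1); [lia|]. destruct (Nat.eqb_spec l 0); lia. }
        split; [exists al; auto|split; auto]. }
      destruct (window q (INR t * y) th T ltac:(lia) Hth HT1 Hnt) as [i [Hi Hgi]].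
      { fold Q. lra. }
      exists i. split; [lia|]. rewrite mult_INR, pow_INR. change (INR (p 1%nat)) with Q in *.
      replace (INR t * Q ^ i * y) with (Q ^ i * (INR t * y)) by ring. auto.
    - exists L. split; auto. split; auto.
      apply final_ineq with k; auto. { assert (0 < ell) by lra. apply Rlt_le. exact H. }
      rewrite pb_A in HL3 by lia. lia. }
  destruct (min_exists _ HB) as [t0 [[[be [Hbe1 Ht0]] [Ht0X Ht0th]] Hmin]].
  destruct (argmax be m Hm) as [j [Hj Hjmax]].
  set (b := be j).
  assert (Hp0 : forall l, (1 <= l <= m)%nat -> (0 < p l)%nat) by (intros l Hl; specialize (Hp l Hl); lia).
  assert (Ht0pos : (0 < t0)%nat) by (rewrite Ht0; apply prod_pow_pos; auto).
  assert (Hb1 : (1 <= b)%nat).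
  { destruct (le_lt_dec 1 b) as [|Hb0]; auto. exfalso.
    assert (t0 = 1%nat).
    { rewrite Ht0. apply prod_pow_one. intros l Hl. destruct (Nat.eq_dec l 1) as [->|]; auto.
      specialize (Hjmax l ltac:(lia)). fold b in Hjmax. lia. }
    rewrite H in Ht0th. lra. }
  set (u := Nat.min b k).
  assert (Hu1 : (1 <= u)%nat) by (unfold u; lia).
  assert (Huk : (u <= k)%nat) by (unfold u; lia).
  assert (Hub : (u <= b)%nat) by (unfold u; lia).
  set (W := (s * u)%nat).
  assert (HW1 : (1 <= W)%nat) by (unfold W; nia).
  set (n := (T - s * k - 1)%nat).
  set (nw := (n / W)%nat).
  assert (HqW : (t0 <= q ^ W)%nat).
  { destruct (le_lt_dec b k) as [Hbk|Hbk].
    - replace u with b by (unfold u; lia).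
      rewrite Ht0. apply Nat.le_trans with (P ^ ssum be m)%nat. apply prod_pow_bound; auto.
      assert (Hss : (ssum be m + b <= m * b)%nat).
      { apply ssum_le; [lia|auto|]. intros l Hl. apply Hjmax; auto. }
      apply Nat.le_trans with (P ^ ((m - 1) * b))%nat.
      { apply Nat.pow_le_mono_r; [lia|]. nia. }
      apply Nat.le_trans with ((q ^ P) ^ ((m - 1) * b))%nat.
      { apply Nat.pow_le_mono_l; auto. }
      rewrite <- Nat.pow_mul_r. apply Nat.pow_le_mono_r; [lia|]. unfold W, s. nia.
    - unfold W. replace u with k by (unfold u; lia). fold X0. lia. }
  destruct (dist_ex (INR t0 * y)) as [n0 Hn0].
  set (dl := INR t0 * y - IZR n0).
  assert (Hdl : Rabs dl < th) by (unfold dl; rewrite <- Hn0; auto).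
  assert (Hbd : forall l, (2 <= l <= m)%nat -> (bdf j u k l <= k)%nat).
  { intros l Hl. unfold bdf. destruct (Nat.eqb_spec l 1); [lia|]. destruct (Nat.eqb_spec l j); lia. }
  assert (Hnd : forall t i, In t (Lst p (bdf j u k) m) ->
      ~ (Z.of_nat t0 | Z.of_nat (t * q ^ i) * n0)%Z).
  { intros t i Ht Hd.
    destruct (Hbox (bdf j u k) eq_refl Hbd t Ht) as [al [Ha1 [Hal [-> _]]]].
    assert (Eh : (prod_pow p al m * q ^ i = prod_pow p (upd al 1 i) m)%nat).
    { rewrite (prod_pow_upd p al 1 i m) by lia. rewrite Nat.mul_comm. f_equal.
      apply prod_pow_ext. intros l Hl. unfold upd. destruct (Nat.eqb_spec l 1); subst; auto. }
    rewrite Eh in Hd. rewrite Ht0 in Hd.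
    assert (Hgj : (upd al 1 i j < be j)%nat).
    { unfold upd. destruct (Nat.eqb_spec j 1); [lia|]. specialize (Hal j ltac:(lia)).
      unfold bdf in Hal. destruct (Nat.eqb_spec j 1); [lia|]. rewrite Nat.eqb_refl in Hal. fold b. lia. }
    apply (B_div p m Hp Hcop be (upd al 1 i) j n0 ltac:(lia) Hgj) in Hd.
    set (h' := prod_pow p (upd be j (upd al 1 i j)) m) in Hd.
    assert (Hh't0 : (h' < t0)%nat) by (rewrite Ht0; apply prod_pow_lt; auto; lia).
    rewrite <- Ht0 in Hd.
    apply (Hmin h' Hh't0). split; [|split].
    - exists (upd be j (upd al 1 i j)). split; auto. unfold upd. destruct (Nat.eqb_spec 1 j); [lia|auto].
    - lia.
    - assert (HB1 : dist_nint (INR h' * y) <= INR h' * Rabs dl / INR t0) by (apply B1_lemma; auto).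
      eapply Rle_lt_trans; [exact HB1|].
      assert (INR h' <= INR t0) by (apply le_INR; lia).
      assert (0 < INR t0) by (apply lt_0_INR; auto).
      assert (Hr1 : INR h' / INR t0 <= 1).
      { apply Rmult_le_reg_r with (INR t0); auto. unfold Rdiv. rewrite Rmult_assoc, Rinv_l by lra; lra. }
      assert (Hr2 : INR h' * Rabs dl / INR t0 = (INR h' / INR t0) * Rabs dl) by (field; lra).
      assert (0 <= Rabs dl) by apply Rabs_pos.
      assert (0 <= INR h' / INR t0) by (apply Rmult_le_pos; [apply pos_INR|apply Rlt_le, Rinv_0_lt_compat; auto]).
      nra. }
  assert (HnW : (nw * W <= n)%nat) by (unfold nw; rewrite Nat.mul_comm; apply Nat.mul_div_le; lia).
  destruct (assemble m p (bdf j u k) r y n nw W Hp Hcop ltac:(lia) eq_refl HnW) as [L [HL1 [HL2 HL3]]].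
  - intros t i Ht Hi. apply Hsz.
    destruct (Hbox (bdf j u k) eq_refl Hbd t Ht) as [al [_ [_ [_ Htx]]]].
    apply Nat.lt_le_trans with (X0 * q ^ i)%nat.
    + apply Nat.mul_lt_mono_pos_r; auto. apply Nat.neq_0_lt_0, Nat.pow_nonzero; lia.
    + unfold X0. rewrite <- Nat.pow_add_r. apply Nat.pow_le_mono_r; unfold n in Hi; lia.
  - intros t w Ht Hw.
    destruct (Hbox (bdf j u k) eq_refl Hbd t Ht) as [al [_ [_ [_ Htx]]]].
    set (h := (t * q ^ (w * W))%nat).
    assert (Hwb : (w * W + W <= n)%nat) by (apply Nat.le_trans with (nw * W)%nat; auto; nia).
    assert (Hh : (h <= q ^ (T - 2))%nat).
    { unfold h. apply Nat.le_trans with (X0 * q ^ (w * W))%nat.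
      + apply Nat.mul_le_mono_r; lia.
      + unfold X0. rewrite <- Nat.pow_add_r. apply Nat.pow_le_mono_r; unfold n in Hwb; lia. }
    assert (Hhd : INR h * Rabs dl <= 1/4).
    { apply le_INR in Hh. rewrite pow_INR in Hh. change (INR q) with Q in Hh.
      assert (Q ^ T = Q ^ (T - 2) * Q ^ 2) by (rewrite <- pow_add; f_equal; lia).
      assert (INR h * Rabs dl <= Q ^ (T - 2) * th).
      { apply Rmult_le_compat; auto. apply pos_INR. apply Rabs_pos. lra. }
      assert (Q ^ (T - 2) * th = / Q ^ 2) by (unfold th; rewrite H; field; repeat split; try apply pow_nonzero; lra).
      assert (4 <= Q ^ 2) by (simpl; nra).
      assert (/ Q ^ 2 <= / 4) by (apply Rinv_le_contravar; lra). lra. }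
    assert (Hlow : 1 / (2 * INR t0) <= dist_nint (INR h * y)).
    { apply (B2_lemma t0 h n0 y); auto. apply Hnd; auto. }
    assert (Ht0R : 0 < INR t0) by (apply lt_0_INR; auto).
    destruct (window q (INR h * y) (1 / (2 * INR t0)) W ltac:(lia)) as [i [Hi Hgi]]; auto.
    { apply Rdiv_lt_0_compat; lra. }
    { apply le_INR in HqW. rewrite pow_INR in HqW. change (INR q) with Q in HqW.
      change (INR q) with Q.
      assert (Q ^ W * (1 / (2 * INR t0)) = Q ^ W / INR t0 / 2) by (field; lra).
      assert (1 <= Q ^ W / INR t0).
      { apply Rmult_le_reg_r with (INR t0); auto. unfold Rdiv. rewrite Rmult_assoc, Rinv_l by lra. lra. }
      lra. }
    exists (w * W + i)%nat. split; [lia|].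
    rewrite mult_INR, pow_INR, pow_add. change (INR (p 1%nat)) with Q in *.
    unfold h in Hgi. rewrite mult_INR, pow_INR in Hgi. change (INR q) with Q in Hgi.
    replace (INR t * (Q ^ (w * W) * Q ^ i) * y) with (Q ^ i * (INR t * Q ^ (w * W) * y)) by ring. auto.
  - exists L. split; auto. split; auto.
    apply final_ineq with k; auto. { assert (0 < ell) by lra. apply Rlt_le. exact H. }
    rewrite pb_B in HL3 by lia.
    assert (Hnk : (s * k + 1 <= n)%nat) by (unfold n; lia).
    assert (Hdm : (n = W * nw + n mod W)%nat) by (unfold nw; apply Nat.div_mod; lia).
    assert (Hmd : (n mod W < W)%nat) by (apply Nat.mod_upper_bound; lia).
    assert (Hnw1 : (1 <= nw)%nat).
    { destruct nw as [|nw']; [|lia]. exfalso. unfold W in *. nia. }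
    assert (Hk2 : (k <= 2 * u * nw)%nat).
    { unfold W in *. nia. }
    replace (m - 1)%nat with (S (m - 2)) by lia. simpl. nia.
Qed.
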